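(* Let $N\in\mathbb{C}^{m\times n}$ have rank $r$ and singular value decomposition $N=U\begin{pmatrix}\Sigma & 0\\ 0 & 0\end{pmatrix}V^{\ast}$, where $\Sigma\in\mathbb{C}^{r\times r}$ is diagonal with positive diagonal entries and $U\in\mathbb{C}^{m\times m}$, $V\in\mathbb{C}^{n\times n}$ are unitary. Let $Y\in\mathbb{C}^{n\times n}$ be arbitrary. Suppose that one of the following conditions holds: (C1') $YN^{\ast}N$ is normal; (C2') there exist $0\neq c_{1}'\in\mathbb{C}$ and $k_{1}'\in\mathbb{N}^{+}$ such that $(YN^{\ast}N)^{k_{1}'}=c_{1}'N^{\dagger}N$; (C3') there exist $0\neq c_{2}'\in\mathbb{C}$, $\ell'\in\mathbb{N}^{+}$ and $k_{2}'\in\mathbb{N}^{+}$ such that $(YN^{\ast}N)^{k_{2}'}=c_{2}'(N^{\ast}N)^{\ell'}$; (C4') $F_{N}Y$ is normal; (C5') there exist $0\neq c_{3}'\in\mathbb{C}$ and $k_{3}'\in\mathbb{N}^{+}$ such that $(F_{N}Y)^{k_{3}'}=c_{3}'F_{N}$; (C6') $F_{N}YN^{\dagger}N=0$; (C7') there exists $k_{4}'\in\mathbb{N}^{+}$ such that $F_{N}Y(N^{\ast}N)^{k_{4}'}=0$. Then $Y=V\begin{pmatrix}Y_{1} & Y_{3}\\ 0 & Y_{4}\end{pmatrix}V^{\ast}$ for some $Y_{1}\in\mathbb{C}^{r\times r}$, $Y_{3}\in\mathbb{C}^{r\times(n-r)}$, $Y_{4}\in\mathbb{C}^{(n-r)\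times(n-r)}$.
   Context: $\mathbb{N}^{+}$ is the set of positive integers. For a complex matrix $A$, $A^{\ast}$ is its conjugate transpose, $A^{\dagger}$ its Moore--Penrose inverse, and $F_{A}:=I-A^{\dagger}A$. A square matrix $B$ is normal if $BB^{\ast}=B^{\ast}B$. *)

(* Defs.v *)
From HB Require Import structures.
From mathcomp Require Import all_boot all_order all_algebra.
From mathcomp Require Import complex reals.
Set Implicit Arguments. Unset Strict Implicit. Unset Printing Implicit Defensive.
Import Order.TTheory GRing.Theory Num.Theory.
Local Open Scope ring_scope.

Definition ctr (C : numClosedFieldType) m n (A : 'M[C]_(m, n)) : 'M[C]_(n, m) :=
  (map_mx Num.conj A)^T.

Definition unitary_mx (C : numClosedFieldType) n (U : 'M[C]_n) : Prop :=
  ctr U *m U = 1%:M.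

Definition normal_mx (C : numClosedFieldType) n (B : 'M[C]_n) : Prop :=
  B *m ctr B = ctr B *m B.

(* X is the Moore--Penrose inverse of A (the four Penrose equations;
   this characterizes A^dagger uniquely). *)
Definition is_MP_inverse (C : numClosedFieldType) m n
    (A : 'M[C]_(m, n)) (X : 'M[C]_(n, m)) : Prop :=
  [/\ A *m X *m A = A, X *m A *m X = X,
      ctr (A *m X) = A *m X & ctr (X *m A) = X *m A].

Definition mxpow (C : numClosedFieldType) n (A : 'M[C]_n) (k : nat) : 'M[C]_n :=
  iter k (mulmx A) 1%:M.

(* Main.v *)
Require Import Defs.
From HB Require Import structures.
From mathcomp Require Import all_boot all_order all_algebra.
From mathcomp Require Import complex reals.
Import Order.TTheory GRing.Theory Num.Theory.
Local Open Scope ring_scope.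
Section S.
Variable C : numClosedFieldType.
Lemma ctrM m n p (A : 'M[C]_(m,n)) (B : 'M[C]_(n,p)) : ctr (A *m B) = ctr B *m ctr A.
Proof. by rewrite /ctr map_mxM trmx_mul. Qed.
Lemma ctrK m n (A : 'M[C]_(m,n)) : ctr (ctr A) = A.
Proof. by apply/matrixP=> i j; rewrite /ctr !mxE conjCK. Qed.
Lemma ctr_block m1 m2 n1 n2 (A : 'M[C]_(m1,n1)) (B : 'M[C]_(m1,n2)) (D : 'M[C]_(m2,n1)) (E : 'M[C]_(m2,n2)) :
  ctr (block_mx A B D E) = block_mx (ctr A) (ctr D) (ctr B) (ctr E).
Proof. by rewrite /ctr map_block_mx tr_block_mx. Qed.
Lemma ctr0 m n : ctr (0 : 'M[C]_(m,n)) = 0.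
Proof. by apply/matrixP=> i j; rewrite /ctr !mxE rmorph0. Qed.
Lemma ctr1 n : ctr (1%:M : 'M[C]_n) = 1%:M.
Proof. by apply/matrixP=> i j; rewrite /ctr !mxE rmorph_nat eq_sym. Qed.
Lemma ctrB m n (A B : 'M[C]_(m,n)) : ctr (A - B) = ctr A - ctr B.
Proof. by apply/matrixP=> i j; rewrite /ctr !mxE rmorphB. Qed.
Lemma mmQ0 m n (Q : 'M[C]_(m,n)) : Q *m ctr Q = 0 -> Q = 0.
Proof.
move=> H; apply/matrixP=> i j; rewrite mxE.
have := congr1 (fun M : 'M[C]_m => M i i) H; rewrite !mxE => /eqP.
under eq_bigr => k _ do rewrite /ctr !mxE -normCK.
move/eqP/psumr_eq0P => /(_ (fun k _ => exprn_ge0 2 (normr_ge0 _))) /(_ j isT)/eqP.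
by rewrite sqrf_eq0 normr_eq0 => /eqP.
Qed.
Lemma mxpowS n (A : 'M[C]_n) k : mxpow A k.+1 = A *m mxpow A k.
Proof. by []. Qed.
Lemma mxpow_unit n (A : 'M[C]_n) k : A \in unitmx -> mxpow A k \in unitmx.
Proof. by move=> hA; elim: k => [|k IH]; rewrite ?unitmx1 // mxpowS unitmx_mul hA IH. Qed.
Lemma mxpowSr n (A : 'M[C]_n) k : mxpow A k.+1 = mxpow A k *m A.
Proof.
elim: k => [|k IH]; first by rewrite mxpowS /= mulmx1 mul1mx.
by rewrite mxpowS {1}IH mulmxA.
Qed.
Lemma scal_unit n (c : C) : c != 0 -> (c%:M : 'M[C]_n) \in unitmx.
Proof.
move=> hc; have h : (c%:M : 'M[C]_n) *m (c^-1)%:M = 1%:M by rewrite -scalar_mxM mulfV.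
by case: (mulmx1_unit h).
Qed.
Lemma cancel_r p n (X : 'M[C]_(p,n)) (M : 'M[C]_n) : X *m M = 0 -> M \in unitmx -> X = 0.
Proof. by move=> h hM; rewrite -(mulmxK hM X) h mul0mx. Qed.
Lemma cancel_l p n (X : 'M[C]_(n,p)) (M : 'M[C]_n) : M *m X = 0 -> M \in unitmx -> X = 0.
Proof. by move=> h hM; rewrite -(mulKmx hM X) h mulmx0. Qed.
Lemma powL m n (P : 'M[C]_m) (Q : 'M[C]_(n,m)) k :
  mxpow (block_mx P 0 Q 0) k.+1 = block_mx (mxpow P k.+1) 0 (Q *m mxpow P k) 0.
Proof.
elim: k => [|k IH].
  by rewrite mxpowS /= mulmx1 !mulmx1.
by rewrite mxpowS IH mulmx_block !mulmx0 !mul0mx !addr0 -mxpowS.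
Qed.
Lemma powR m n (R : 'M[C]_n) (Q : 'M[C]_(n,m)) k :
  mxpow (block_mx 0 0 Q R) k.+1 = block_mx 0 0 (mxpow R k *m Q) (mxpow R k.+1).
Proof.
elim: k => [|k IH].
  by rewrite mxpowS /= !mulmx1 mul1mx.
rewrite mxpowS IH mulmx_block !mulmx0 !mul0mx !add0r -mxpowS.
by rewrite mulmxA -mxpowS.
Qed.
Lemma uc m n (U : 'M[C]_m) (V : 'M[C]_n) (A B : 'M[C]_(m,n)) :
  ctr U *m U = 1%:M -> ctr V *m V = 1%:M -> U *m A *m ctr V = U *m B *m ctr V -> A = B.
Proof.
move=> hU hV h.
have: ctr U *m (U *m A *m ctr V) *m V = ctr U *m (U *m B *m ctr V) *m V by rewrite h.
by rewrite !mulmxA hU !mul1mx -!mulmxA hV !mulmx1.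
Qed.

Theorem main (r m' n' : nat)
    (N : 'M[C]_(r + m', r + n'))
    (U : 'M[C]_(r + m')) (V : 'M[C]_(r + n'))
    (Sigma : 'M[C]_r)
    (Ndag : 'M[C]_(r + n', r + m'))
    (Y : 'M[C]_(r + n')) :
  \rank N = r ->
  is_diag_mx Sigma -> (forall j : 'I_r, 0 < Sigma j j) ->
  unitary_mx U -> unitary_mx V ->
  N = U *m block_mx Sigma 0 0 0 *m ctr V ->
  is_MP_inverse N Ndag ->
  let FN := 1%:M - Ndag *m N in
  let NsN := ctr N *m N in
  (normal_mx (Y *m NsN) \/
      (exists (c : C) (k : nat), [/\ c != 0, (0 < k)%N &
         mxpow (Y *m NsN) k = c *: (Ndag *m N)]) \/
      (exists (c : C) (l k : nat), [/\ c != 0, (0 < l)%N, (0 < k)%N &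
         mxpow (Y *m NsN) k = c *: mxpow NsN l]) \/
      normal_mx (FN *m Y) \/
      (exists (c : C) (k : nat), [/\ c != 0, (0 < k)%N &
         mxpow (FN *m Y) k = c *: FN]) \/
      FN *m Y *m (Ndag *m N) = 0 \/
      (exists k : nat, (0 < k)%N /\ FN *m Y *m mxpow NsN k = 0)) ->
  exists (Y1 : 'M[C]_r) (Y3 : 'M[C]_(r, n')) (Y4 : 'M[C]_n'),
    Y = V *m block_mx Y1 Y3 0 Y4 *m ctr V.
Proof.
move=> _ dS pS Uu Vu HN [MP1 MP2 MP3 MP4] FN NsN H.
have VVc : V *m ctr V = 1%:M := mulmx1C Vu.
have UUc : U *m ctr U = 1%:M := mulmx1C Uu.
pose cV (A : 'M[C]_(r+n')) := V *m A *m ctr V.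
have cVK A : ctr V *m cV A *m V = A by rewrite /cV !mulmxA Vu mul1mx -mulmxA Vu mulmx1.
have cV_inj A B : cV A = cV B -> A = B by move=> h; rewrite -(cVK A) h cVK.
have cVM A B : cV A *m cV B = cV (A *m B).
  by rewrite /cV -!mulmxA (mulmxA (ctr V) V) Vu mul1mx.
have ctr_cV A : ctr (cV A) = cV (ctr A) by rewrite /cV !ctrM ctrK mulmxA.
have cV1 : cV 1%:M = 1%:M by rewrite /cV mulmx1 VVc.
have cV0 : cV 0 = 0 by rewrite /cV mulmx0 mul0mx.
have cVZ c A : c *: cV A = cV (c *: A) by rewrite /cV -scalemxAr -scalemxAl.
have cVB A B : cV A - cV B = cV (A - B) by rewrite /cV mulmxBr mulmxBl.
have cVpow A k : mxpow (cV A) k = cV (mxpow A k).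
  by elim: k => [|k IH]; rewrite ?cV1 // !mxpowS IH cVM.
have Su : Sigma \in unitmx.
  rewrite unitmxE det_trig ?is_diag_mx_is_trig // unitfE.
  by apply/prodf_neq0 => i _; exact: lt0r_neq0 (pS i).
pose D := ctr Sigma *m Sigma.
have Du : D \in unitmx.
  have h : ctr Sigma *m ctr (invmx Sigma) = 1%:M by rewrite -ctrM mulVmx // ctr1.
  by rewrite unitmx_mul Su andbT; case: (mulmx1_unit h).
set Y' := ctr V *m Y *m V.
have HY : Y = cV Y' by rewrite /cV /Y' !mulmxA VVc mul1mx -mulmxA VVc mulmx1.
have HY' := submxK Y'.
set Y1 := ulsubmx Y' in HY'; set Y2 := dlsubmx Y' in HY'.
set Y3 := ursubmx Y' in HY'; set Y4 := drsubmx Y' in HY'.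
suff h2 : Y2 = 0 by exists Y1, Y3, Y4; rewrite HY -HY' h2.
set S := block_mx Sigma 0 0 0 : 'M[C]_(r + m', r + n').
have HNs : NsN = cV (block_mx D 0 0 0).
  have hSS : ctr S *m S = block_mx D 0 0 0.
    by rewrite ctr_block !ctr0 mulmx_block !mulmx0 !mul0mx !addr0.
  rewrite /NsN HN /cV !ctrM ctrK -!mulmxA (mulmxA (ctr U) U) Uu mul1mx.
  by rewrite (mulmxA (ctr S)) hSS.
pose W := ctr V *m Ndag *m U.
have HNd : Ndag = V *m W *m ctr U by rewrite /W !mulmxA VVc mul1mx -mulmxA UUc mulmx1.
have e1 : S *m W *m S = S.
  apply: (@uc _ _ U V) => //; move: MP1.
  rewrite HN HNd !mulmxA -(mulmxA _ (ctr V) V) Vu mulmx1 -(mulmxA _ (ctr U) U) Uu mulmx1.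
  by [].
have HNdN0 : Ndag *m N = cV (W *m S).
  by rewrite HNd HN /cV !mulmxA -(mulmxA _ (ctr U) U) Uu mulmx1.
rewrite HNdN0 ctr_cV in MP4; move/cV_inj in MP4.
have HW := submxK W.
set W1 := ulsubmx W in HW; set W2 := ursubmx W in HW.
set W3 := dlsubmx W in HW; set W4 := drsubmx W in HW.
rewrite -HW /S !mulmx_block !mulmx0 !mul0mx !addr0 in e1.
case/eq_block_mx: e1 => e1 _ _ _.
rewrite -HW /S mulmx_block !mulmx0 ?mul0mx ?addr0 ctr_block !ctr0 in MP4.
case/eq_block_mx: MP4 => _ h3 _ _.
have h3' : W3 *m Sigma = 0 by rewrite -[W3 *m Sigma]ctrK h3 ctr0.
have h1 : W1 *m Sigma = 1%:M.
  rewrite -mulmxA in e1; have := congr1 (mulmx (invmx Sigma)) e1.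
  by rewrite !mulKmx // mulVmx.
pose E := block_mx (1%:M : 'M[C]_r) 0 0 (0 : 'M[C]_n').
have HNdN : Ndag *m N = cV E.
  by rewrite HNdN0 -HW /S mulmx_block !mulmx0 !addr0 h1 h3'.
have HFN : FN = cV (block_mx 0 0 0 1%:M).
  rewrite /FN HNdN -cV1 cVB; congr cV.
  by rewrite [1%:M : 'M[C]_(r + n')]scalar_mx_block opp_block_mx add_block_mx !subrr !subr0.
have YNs : Y *m NsN = cV (block_mx (Y1 *m D) 0 (Y2 *m D) 0).
  by rewrite HY HNs cVM -HY' mulmx_block !mulmx0 !addr0.
have FNY : FN *m Y = cV (block_mx 0 0 Y2 Y4).
  by rewrite HFN HY cVM -HY' mulmx_block !mul0mx !mul1mx !addr0 !add0r.
have key (Z : 'M[C]_(n', r)) : Z *m D = 0 -> Z = 0 by move=> h; exact: cancel_r h Du.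
case: H => [h|[h|[h|[h|[h|[h|h]]]]]].
- move: h; rewrite /normal_mx YNs !ctr_cV !cVM => /cV_inj.
  rewrite ctr_block !ctr0 !mulmx_block !mulmx0 !mul0mx !addr0 => /eq_block_mx [_ _ _ h].
  by apply: key; apply: mmQ0.
- case: h => c [k [c0 k0 h]].
  move: h; rewrite YNs HNdN cVpow cVZ => /cV_inj.
  case: k k0 => // k _.
  rewrite powL scale_block_mx !scaler0 scalemx1 => /eq_block_mx [hP _ hQ _].
  have : mxpow (Y1 *m D) k.+1 \in unitmx by rewrite hP scal_unit.
  rewrite mxpowSr unitmx_mul => /andP [hk _].
  by apply: key; apply: cancel_r hQ hk.
- case: h => c [l [k [c0 l0 k0 h]]].
  move: h; rewrite YNs HNs !cVpow cVZ => /cV_inj.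
  case: k k0 => // k _; case: l l0 => // l _.
  rewrite !powL !mul0mx scale_block_mx !scaler0 => /eq_block_mx [hP _ hQ _].
  have : mxpow (Y1 *m D) k.+1 \in unitmx.
    by rewrite hP -mul_scalar_mx unitmx_mul scal_unit // mxpow_unit.
  rewrite mxpowSr unitmx_mul => /andP [hk _].
  by apply: key; apply: cancel_r hQ hk.
- move: h; rewrite /normal_mx FNY !ctr_cV !cVM => /cV_inj.
  rewrite ctr_block !ctr0 !mulmx_block !mulmx0 !mul0mx !addr0 !add0r => /eq_block_mx [h _ _ _].
  have : ctr Y2 = 0 by apply: mmQ0; rewrite ctrK -h.
  by move=> h'; rewrite -[Y2]ctrK h' ctr0.
- case: h => c [k [c0 k0 h]].
  move: h; rewrite FNY HFN cVpow cVZ => /cV_inj.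
  case: k k0 => // k _.
  rewrite powR scale_block_mx !scaler0 scalemx1 => /eq_block_mx [_ _ hQ hR].
  have : mxpow Y4 k.+1 \in unitmx by rewrite hR scal_unit.
  rewrite mxpowSr unitmx_mul => /andP [hk _].
  exact: cancel_l hQ hk.
- move: h; rewrite FNY HNdN cVM -cV0 => /cV_inj.
  rewrite mulmx_block !mulmx0 !mul0mx !addr0 mulmx1 -block_mx0 => /eq_block_mx [_ _ h _].
  exact: h.
- case: h => k [k0 h].
  move: h; rewrite FNY HNs cVpow cVM -cV0 => /cV_inj.
  case: k k0 => // k _.
  rewrite powL mul0mx mulmx_block !mulmx0 !mul0mx !addr0 -block_mx0 => /eq_block_mx [_ _ h _].
  by apply: cancel_r h _; apply: mxpow_unit.
Qed.
End S.
Theorem lemma2p3 (R : realType) (r m' n' : nat)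
    (N : 'M[R[i]]_(r + m', r + n'))
    (U : 'M[R[i]]_(r + m')) (V : 'M[R[i]]_(r + n'))
    (Sigma : 'M[R[i]]_r)
    (Ndag : 'M[R[i]]_(r + n', r + m'))
    (Y : 'M[R[i]]_(r + n')) :
  \rank N = r ->
  is_diag_mx Sigma -> (forall j : 'I_r, 0 < Sigma j j) ->
  unitary_mx U -> unitary_mx V ->
  N = U *m block_mx Sigma 0 0 0 *m ctr V ->
  is_MP_inverse N Ndag ->
  let FN := 1%:M - Ndag *m N in
  let NsN := ctr N *m N in
  (normal_mx (Y *m NsN) \/
      (exists (c : R[i]) (k : nat), [/\ c != 0, (0 < k)%N &
         mxpow (Y *m NsN) k = c *: (Ndag *m N)]) \/
      (exists (c : R[i]) (l k : nat), [/\ c != 0, (0 < l)%N, (0 < k)%N &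
         mxpow (Y *m NsN) k = c *: mxpow NsN l]) \/
      normal_mx (FN *m Y) \/
      (exists (c : R[i]) (k : nat), [/\ c != 0, (0 < k)%N &
         mxpow (FN *m Y) k = c *: FN]) \/
      FN *m Y *m (Ndag *m N) = 0 \/
      (exists k : nat, (0 < k)%N /\ FN *m Y *m mxpow NsN k = 0)) ->
  exists (Y1 : 'M[R[i]]_r) (Y3 : 'M[R[i]]_(r, n')) (Y4 : 'M[R[i]]_n'),
    Y = V *m block_mx Y1 Y3 0 Y4 *m ctr V.
Proof.
exact: main.
Qed.
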